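(* Let $f\colon\mathbb{N}\to\mathbb{R}$ be a superlinear function with $f(r)\geq 1+3r$ for all $r\in\mathbb{N}$. Then every finite graph $G$ is a minor of a finite graph $\tilde G$ with growth $f_{\tilde G}(r)\leq f(r)$ for every positive integer $r$.
   Context: $\mathbb{N}$ is the set of positive integers. A function $f\colon\mathbb{N}\to\mathbb{R}$ is superlinear if $f(x)/x\to\infty$ as $x\to\infty$. The growth of a finite graph $G$ is the function $f_G\colon\mathbb{N}\to\mathbb{N}$ where $f_G(r)$ is the maximum of $|V(H)|$ over all subgraphs $H$ of $G$ of radius at most $r$. A graph $H$ is a minor of $G$ if $H$ is isomorphic to a graph obtained from a subgraph of $G$ by contracting edges. *)

(* Defs.v *)
From HB Require Import structures.
From mathcomp Require Import all_boot all_order all_algebra.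
From mathcomp Require Import all_classical all_reals all_analysis.
Set Implicit Arguments. Unset Strict Implicit. Unset Printing Implicit Defensive.
Import Order.TTheory GRing.Theory Num.Theory.

Definition simple_graph (T : finType) (e : rel T) : Prop :=
  symmetric e /\ irreflexive e.

Definition connected_in (T : finType) (e : rel T) (A : {set T}) : Prop :=
  forall u v, u \in A -> v \in A ->
    connect [rel x y | [&& x \in A, y \in A & e x y]] u v.

(* This is
   exactly "H is isomorphic to a graph obtained from a subgraph of G by
   contracting edges". *)
Definition minor_of (T : finType) (e : rel T) (T' : finType) (e' : rel T') : Prop :=
  exists phi : T -> {set T'},
    [/\ (forall x, phi x != finset.set0),
        (forall x y, x != y -> [disjoint phi x & phi y]),
        (forall x, connected_in e' (phi x)) &
        (forall x y, e x y -> exists u v, [/\ u \in phi x, v \in phi y & e' u v])].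

Definition is_subgraph (T : finType) (e : rel T) (S : {set T}) (F : {set T * T}) : bool :=
  [forall x, forall y, ((x, y) \in F) ==>
      [&& x \in S, y \in S, e x y & (y, x) \in F]].

Definition dist_le (T : finType) (F : {set T * T}) (r : nat) (c x : T) : bool :=
  [exists k : 'I_r.+1, exists t : k.-tuple T,
      path (fun a b => (a, b) \in F) c t && (last c t == x)].

Definition radius_le (T : finType) (S : {set T}) (F : {set T * T}) (r : nat) : bool :=
  [exists c in S, forall x in S, dist_le F r c x].

Definition growth (T : finType) (e : rel T) (r : nat) : nat :=
  \max_(S : {set T} | [exists F : {set T * T}, is_subgraph e S F && radius_le S F r]) #|S|.

Local Open Scope classical_set_scope.
Local Open Scope ring_scope.
Definition superlinear (R : realType) (f : nat -> R) : Prop :=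
  (fun x : nat => f x / x%:R) @ \oo --> +oo.

(* Main.v *)
Require Import Defs.
From HB Require Import structures.
From mathcomp Require Import all_boot all_order all_algebra.
From mathcomp Require Import all_classical all_reals all_analysis.
Import Order.TTheory GRing.Theory Num.Theory.
From mathcomp Require Import fintype finset zify.
Set Implicit Arguments. Unset Strict Implicit. Unset Printing Implicit Defensive.

Lemma card_bigcup_le (I T : finType) (P : {pred I}) (F : I -> {set T}) :
  (#|\bigcup_(i in P) F i| <= \sum_(i in P) #|F i|)%N.
Proof.
elim/big_ind2 : _ => // [|m A n B Am Bn]; first by rewrite cards0.
by rewrite (leq_trans (leq_card_setU _ _))// leq_add.
Qed.

Section Ball.
Variables (V : finType) (E : rel V) (symE : symmetric E) (c : V).

Fixpoint gball_rec d : {set V} :=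
  if d is d'.+1 then gball_rec d' :|: [set y | [exists x in gball_rec d', E x y]] else [set c].
Fact gball_key : unit. Proof. exact tt. Qed.
Definition gball := locked_with gball_key gball_rec.

Lemma gballS d y : (y \in gball d.+1) = (y \in gball d) || [exists x in gball d, E x y].
Proof. by rewrite /gball; case: gball_key; rewrite /= in_setU inE. Qed.
Lemma gball0 : gball 0 = [set c]. Proof. by rewrite /gball; case: gball_key. Qed.

Definition deg x := #|[set y | E x y]|.
Definition out d x := [set y | E x y & y \notin gball d].
Definition Ed d := (\sum_(x in gball d) #|out d x|)%N.

Lemma gball_sub d : gball d \subset gball d.+1.
Proof. by apply/subsetP => x xb; rewrite gballS xb. Qed.

Lemma gball_mono d d' : (d <= d')%N -> gball d \subset gball d'.
Proof.
move=> h; elim: d' h => [|d' IH]; first by rewrite leqn0 => /eqP ->.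
rewrite leq_eqVlt => /orP [/eqP -> //|h].
exact: subset_trans (IH h) (gball_sub d').
Qed.

Lemma layer_le d : (#|gball d.+1 :\: gball d| <= Ed d)%N.
Proof.
apply: leq_trans (card_bigcup_le (mem (gball d)) (out d)).
apply: subset_leq_card; apply/subsetP => y; rewrite in_setD gballS.
case yb: (y \in gball d) => //=.
move=> /existsP [x /andP [xb exy]].
apply/bigcupP; exists x => //; by rewrite inE exy yb.
Qed.

Lemma gball_card_step d : (#|gball d.+1| <= #|gball d| + Ed d)%N.
Proof.
have := layer_le d; rewrite cardsDS ?gball_sub //.
have := subset_leq_card (gball_sub d); lia.
Qed.

Variable b : V.

Lemma Ed_step d :
  (forall x, x \in gball d.+1 -> x \notin gball d -> (deg x <= 2 + (x == b))%N) ->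
  (Ed d.+1 <= Ed d + (b \in gball d.+1 :\: gball d))%N.
Proof.
move=> hdeg.
apply: leq_trans (_ : (\sum_(x in gball d.+1 :\: gball d) (1 + (x == b)) <= _)%N).
  rewrite /Ed (big_setID (gball d)).
  rewrite big1 ?add0n; last first.
    move=> x /setIP [_ xb]; apply/eqP; rewrite cards_eq0; apply/eqP/setP => y.
    rewrite in_set0 /out in_set gballS; apply/negbTE; rewrite negb_and negbK.
    case exy: (E x y) => //=; apply/orP; right.
    by apply/existsP; exists x; rewrite xb exy.
  apply: leq_sum => x /setDP [xb1 xnb].
  have := xb1; rewrite gballS (negbTE xnb) /= => /existsP [z /andP [zb ezx]].
  have := hdeg x xb1 xnb; rewrite /deg (cardsD1 z) inE -(symE z x) ezx add1n.
  rewrite /= add1n add2n ltnS => h; apply: leq_trans h; apply: subset_leq_card; apply/subsetP => y.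
  rewrite in_setD1 /out !in_set => /andP [exy ynb]; rewrite exy andbT.
  apply/eqP => yz; move: ynb; rewrite yz gballS.
  by rewrite zb.
rewrite big_split /= sum1_card leq_add //; first exact: layer_le.
case: (boolP (b \in gball d.+1 :\: gball d)) => hb.
  rewrite (bigD1 b) //= eqxx big1 // => x /andP [_ /negbTE ->] //.
rewrite big1 // => x xl; apply/eqP; rewrite eqb0; apply/eqP => xb.
by move: hb; rewrite -xb xl.
Qed.

Variable r : nat.
Hypothesis hdeg3 : forall x, (deg x <= 3)%N.
Hypothesis hdeg2 : forall x, x \in gball r -> x != b -> (deg x <= 2)%N.

Lemma deg_le x : x \in gball r -> (deg x <= 2 + (x == b))%N.
Proof.
move=> xr; case: (eqVneq x b) => [-> |xnb]; last by rewrite addn0 hdeg2.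
exact: hdeg3.
Qed.

Lemma Ed_bound d : (d <= r)%N -> (Ed d <= 2 + (b \in gball d))%N.
Proof.
elim: d => [|d IH] h.
  rewrite /Ed gball0 big_set1 /= inE.
  have cr : c \in gball r by apply: (subsetP (gball_mono (leq0n r))); rewrite gball0 inE.
  rewrite eq_sym; apply: leq_trans (deg_le cr); apply: subset_leq_card.
  by apply/subsetP => y; rewrite /out !in_set => /andP [].
apply: leq_trans (Ed_step _) _.
  move=> x xd _; apply: deg_le; exact: (subsetP (gball_mono h)).
have := IH (ltnW h).
have : b \in gball d -> b \in gball d.+1 by move=> hb; rewrite gballS hb.
rewrite in_setD; case: (b \in gball d); case: (b \in gball d.+1) => //=; lia.
Qed.

Lemma gball_card : (#|gball r| <= 1 + 3 * r)%N.
Proof.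
suff : forall d, (d <= r)%N -> (#|gball d| <= 1 + 3 * d)%N by apply.
elim => [|d IH] h; first by rewrite gball0 cards1.
apply: leq_trans (gball_card_step d) _.
have := IH (ltnW h); have := Ed_bound (ltnW h).
case: (b \in gball d) => /=; lia.
Qed.

End Ball.

Section Row.
Variables (H : nat) (hH : (0 < H)%N).
Definition LL := (H.*2)%N.
Lemma LL_gt0 : (0 < LL)%N. Proof. rewrite /LL; lia. Qed.

Definition rowpsi (p : nat) := let q := (p %% LL)%N in if (q < H)%N then q else (LL - q)%N.
Definition rowown (p : nat) := if (p %% LL < H)%N then (p %/ LL)%N else (p %/ LL).+1.

Lemma divmod_uniq k q : (q < LL)%N -> ((k * LL + q) %/ LL = k /\ (k * LL + q) %% LL = q)%N.
Proof.
move=> hq; split; first by rewrite divnMDl ?LL_gt0 // divn_small // addn0.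
by rewrite modnMDl modn_small.
Qed.

Lemma row_step p : [/\ (rowpsi p.+1 <= (rowpsi p).+1)%N, (rowpsi p <= (rowpsi p.+1).+1)%N &
   ((rowpsi p < H)%N -> (rowpsi p.+1 < H)%N -> rowown p = rowown p.+1)].
Proof.
rewrite /rowpsi /rowown.
have := divn_eq p LL; have := ltn_pmod p LL_gt0.
move: (p %/ LL)%N (p %% LL)%N => k q hq ->.
have [k' [q' [hk' [hq' hq'L]]]] : exists k' q', (k * LL + q).+1 = k' * LL + q' /\
   ((q.+1 < LL /\ k' = k /\ q' = q.+1) \/ (q.+1 = LL /\ k' = k.+1 /\ q' = 0))%N /\ (q' < LL)%N.
  case: (ltnP q.+1 LL) => h.
    by exists k, q.+1; split; [lia | split; [left|]].
  by exists k.+1, 0%N; rewrite /LL in h hq *; split; [lia|split; [right|]]; rewrite /LL; lia.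
rewrite hk'; have [-> ->] := divmod_uniq k' hq'L.
rewrite /LL in hq hq'L hq' *.
case: hq' => [[h1 [-> ->]]|[h1 [-> ->]]]; split; case: ifP; case: ifP; lia.
Qed.

Lemma row_attach k : (rowpsi (k * LL) = 0 /\ rowown (k * LL) = k)%N.
Proof.
have := divmod_uniq k LL_gt0; rewrite addn0 /rowpsi /rowown => -[-> ->].
by rewrite hH.
Qed.
End Row.

Section Graph.
Variables (T : finType) (e : rel T) (hsym : symmetric e) (hirr : irreflexive e).
Variables (H : nat) (hH : (0 < H)%N).
Local Notation L := (LL H).
Definition NN := (#|T| * L)%N.
Local Notation K := H.
Definition VV := ((T * 'I_NN) + (T * T * 'I_K))%type.
Definition rk (v : T) : nat := enum_rank v.

Definition adj (x y : VV) : bool :=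
  match x, y with
  | inl (u, p), inl (u', p') => (u == u') && ((p.+1 == p') || (p'.+1 == p))
  | inl (u, p), inr (u', v, t) => [&& u == u', e u v, t == 0%N :> nat & p == rk v * L :> nat]
  | inr (u, v, t), inl (u', p) => [&& u == u', e u v, t == 0%N :> nat & p == rk v * L :> nat]
  | inr (u, v, t), inr (u', v', t') =>
      [&& u == u', v == v' & (t.+1 == t') || (t'.+1 == t)]
      || [&& e u v, u' == v, v' == u, t == K.-1 :> nat & t' == K.-1 :> nat]
  end.

Lemma adj_sym : symmetric adj.
Proof.
move=> [[u p]|[[u v] t]] [[u' p']|[[u' v'] t']] /=.
- by rewrite eq_sym orbC.
- by case: (eqVneq u u') => [->|] //=; rewrite eq_sym => /negbTE ->.
- by case: (eqVneq u u') => [->|] //=; rewrite eq_sym => /negbTE ->.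
- congr orb; first by rewrite (eq_sym u) (eq_sym v) orbC.
  by apply/idP/idP => /and5P [h1 /eqP h2 /eqP h3 h4 h5]; subst; rewrite hsym !eqxx h4 h5 h1.
Qed.

Lemma adj_irr : irreflexive adj.
Proof.
move=> [[u p]|[[u v] t]] /=; first by rewrite eqxx /= !gtn_eqF.
rewrite !eqxx /= (gtn_eqF (ltnSn t)) /=; case: (eqVneq u v) => [->|h]; first by rewrite hirr.
by rewrite /= ?andbF.
Qed.

Definition psi (x : VV) : nat :=
  match x with inl (_, p) => rowpsi H p | inr (_, _, t) => t.+1 end.
Definition own (x : VV) : T * nat :=
  match x with inl (u, p) => (u, rowown H p) | inr (u, v, _) => (u, rk v) end.

Lemma adj_psi x y : adj x y -> (psi y <= (psi x).+1)%N.
Proof.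
move: x y => [[u p]|[[u v] t]] [[u' p']|[[u' v'] t']] /=.
- case/andP => _ /orP [/eqP <- | /eqP <-].
    by have [] := row_step hH p.
  by have [] := row_step hH p'.
- by case/and4P => _ _ /eqP -> _.
- case/and4P => _ _ /eqP -> /eqP ->.
  by have [-> _] := row_attach hH (rk v).
- case/orP => [/and3P [_ _ /orP [/eqP <-|/eqP <-]] | /and5P [_ _ _ /eqP -> /eqP ->]] //.
  by rewrite ltnW.
Qed.

Lemma adj_own x y : adj x y -> (psi x < H)%N -> (psi y < H)%N -> own x = own y.
Proof.
move: x y => [[u p]|[[u v] t]] [[u' p']|[[u' v'] t']] /=.
- case/andP => /eqP <- /orP [/eqP <- | /eqP <-] h1 h2.
    by have [_ _ ->] := row_step hH p.
  by have [_ _ ->] := row_step hH p'.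
- case/and4P => /eqP <- _ _ /eqP -> _ _.
  by have [_ ->] := row_attach hH (rk v').
- case/and4P => /eqP <- _ _ /eqP -> _ _.
  by have [_ ->] := row_attach hH (rk v).
- case/orP => [/and3P [/eqP <- /eqP <- _] // | /and5P [_ _ _ /eqP -> _]].
  by rewrite prednK // ltnn.
Qed.

Lemma card_inj_le (A B : finType) (X : {set A}) (Y : {set B}) (g : A -> B) :
  {in X &, injective g} -> (forall x, x \in X -> g x \in Y) -> (#|X| <= #|Y|)%N.
Proof.
move=> inj hY; rewrite -(card_in_imset inj); apply: subset_leq_card.
by apply/subsetP => y /imsetP [x xX ->]; apply: hY.
Qed.

Lemma rk_inj v1 v2 : (rk v1 * L = rk v2 * L)%N -> v1 = v2.
Proof.
move=> h; apply: enum_rank_inj; apply: val_inj => /=.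
by apply/eqP; rewrite -(eqn_pmul2r (LL_gt0 hH)) h.
Qed.

Definition gro (p : nat) (y : VV) : option bool :=
  match y with inl (_, p') => Some (p < p')%N | inr _ => None end.

Lemma gro_inj u p : {in [set y | adj (inl (u, p)) y] &, injective (gro p)}.
Proof.
move=> [[u1 p1]|[[u1 v1] t1]] [[u2 p2]|[[u2 v2] t2]]; rewrite !inE /= //.
- case/andP => /eqP <- h1 /andP [/eqP <- h2] [] hg.
  congr (inl (_, _)); apply: val_inj => /=; move: h1 h2 hg.
  by case/orP => /eqP h1; case/orP => /eqP h2; lia.
- case/and4P => /eqP <- _ /eqP h1 /eqP h2 /and4P [/eqP <- _ /eqP h3 /eqP h4] _.
  have ? := rk_inj (etrans (esym h2) h4); subst.
  by congr (inr (_, _, _)); apply: val_inj => /=; rewrite h1 h3.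
Qed.

Definition ghe (u v : T) (t : nat) (y : VV) : bool :=
  match y with inl _ => false | inr (u', v', t') => ~~ [&& u' == u, v' == v & (t' < t)%N] end.

Lemma ghe_inj u v t : {in [set y | adj (inr (u, v, t)) y] &, injective (ghe u v t)}.
Proof.
have Kp : (K.-1.+1 = K)%N by rewrite prednK.
have ltK (z : 'I_K) : (z < K)%N by [].
have vu : e u v -> (v == u) = false.
  by move=> he; apply/negbTE/eqP => vu; subst; rewrite hirr in he.
move=> [[u1 p1]|[[u1 v1] t1]] [[u2 p2]|[[u2 v2] t2]]; rewrite !inE /=.
- case/and4P => /eqP <- _ /eqP h1 /eqP h2 /and4P [/eqP <- _ /eqP h3 /eqP h4] _.
  by congr (inl (_, _)); apply: val_inj => /=; rewrite h2 h4.
- case/and4P => _ /vu vu' /eqP h1 _.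
  case/orP => [/and3P [/eqP <- /eqP <- _]|/and5P [_ /eqP -> /eqP -> /eqP h2 _]];
  rewrite /= ?eqxx ?vu' /=; lia.
- move=> + /and4P [_ /vu vu' /eqP h1 _].
  case/orP => [/and3P [/eqP <- /eqP <- _]|/and5P [_ /eqP -> /eqP -> /eqP h2 _]];
  rewrite /= ?eqxx ?vu' /=; lia.
- case: (boolP (e u v)) => [/vu vu'|/negbTE hne]; last first.
    rewrite /= !orbF => /and3P [/eqP <- /eqP <- h1] /and3P [/eqP <- /eqP <- h2].
    rewrite /= !eqxx /= => hg.
    congr (inr (_, _, _)); apply: val_inj => /=; move: h1 h2 hg.
    by case/orP => /eqP h1; case/orP => /eqP h2; lia.
  case/orP => [/and3P [/eqP <- /eqP <- h1]|/and5P [he /eqP -> /eqP -> /eqP h1 /eqP h1']];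
  (case/orP => [/and3P [/eqP <- /eqP <- h2]|/and5P [he' /eqP -> /eqP -> /eqP h2 /eqP h2']]);
  rewrite /= ?eqxx ?vu' /= => hg.
  + congr (inr (_, _, _)); apply: val_inj => /=; move: h1 h2 hg.
    by case/orP => /eqP h1; case/orP => /eqP h2; lia.
  + have := ltK t1; move: h1 hg; case/orP => /eqP h1; lia.
  + have := ltK t2; move: h2 hg; case/orP => /eqP h2; lia.
  + by congr (inr (_, _, _)); apply: val_inj => /=; rewrite h1' h2'.
Qed.

Lemma deg_le3 x : (#|[set y | adj x y]| <= 3)%N.
Proof.
case: x => [[u p]|[[u v] t]].
  apply: leq_trans (card_inj_le (@gro_inj u p) (Y := [set: option bool]) _) _ => //.
  by rewrite cardsT card_option card_bool.
apply: leq_trans (card_inj_le (@ghe_inj u v t) (Y := [set: bool]) _) _ => //.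
by rewrite cardsT card_bool.
Qed.

Lemma deg_big x : (2 < #|[set y | adj x y]|)%N ->
  exists u (p : 'I_NN) v, x = inl (u, p) /\ (p : nat) = (rk v * L)%N.
Proof.
case: x => [[u p]|[[u v] t]]; last first.
  have := card_inj_le (@ghe_inj u v t) (Y := [set: bool]) (fun _ _ => in_setT _).
  by rewrite cardsT card_bool => h1 h2; have := leq_trans h2 h1.
case: (pickP (fun v => (p == rk v * L :> nat))) => [v /eqP hv | hnone] h.
  by exists u, p, v.
have : (#|[set y | adj (inl (u, p)) y]| <= #|[set Some true; Some false]|)%N.
  apply: card_inj_le (@gro_inj u p) _.
  move=> [[u1 p1]|[[u1 v1] t1]]; rewrite !inE /=.
    by case: (p < p1)%N; rewrite eqxx ?orbT.
  by case/and4P => _ _ _; rewrite hnone.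
by rewrite cards2 /= => h'; have := leq_trans h h'.
Qed.

Lemma bigv_psi x : (2 < #|[set y | adj x y]|)%N -> psi x = 0%N.
Proof.
by case/deg_big => u [p [v [-> hp]]] /=; rewrite hp; have [-> _] := row_attach hH (rk v).
Qed.

Lemma bigv_uniq x1 x2 : (2 < #|[set y | adj x1 y]|)%N -> (2 < #|[set y | adj x2 y]|)%N ->
  own x1 = own x2 -> x1 = x2.
Proof.
case/deg_big => u1 [p1 [v1 [-> hp1]]]; case/deg_big => u2 [p2 [v2 [-> hp2]]] /=.
rewrite hp1 hp2; have [_ ->] := row_attach hH (rk v1); have [_ ->] := row_attach hH (rk v2).
case=> <- hv; congr (inl (_, _)); apply: val_inj => /=; by rewrite hp1 hp2 hv.
Qed.
End Graph.

Lemma gball_pot (V : finType) (E : rel V) (symE : symmetric E) (c : V) (psi : V -> nat)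
  (X : Type) (own : V -> X) (H : nat) :
  (forall x y, E x y -> (psi y <= (psi x).+1)%N) ->
  (forall x y, E x y -> (psi x < H)%N -> (psi y < H)%N -> own x = own y) ->
  forall d x, x \in gball E c d -> (psi c <= psi x + d)%N /\
    ((psi c + d < H)%N -> own x = own c /\ (psi x <= psi c + d)%N).
Proof.
move=> h1 h2; elim => [|d IH] x.
  by rewrite gball0 inE => /eqP ->; rewrite addn0.
rewrite gballS => /orP [xb | /existsP [z /andP [zb ezx]]].
  have [IH1 IH2] := IH x xb; split; first lia.
  move=> h; have [] := IH2 (ltnW (leq_trans _ h)); first by rewrite addnS.
  move=> -> hx; split=> //; lia.
have [IH1 IH2] := IH z zb.
have hzx : (psi z <= (psi x).+1)%N by apply: h1; rewrite symE.
have hxz : (psi x <= (psi z).+1)%N by apply: h1.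
split; first lia.
move=> h; have [] := IH2 (ltnW (leq_trans _ h)); first by rewrite addnS.
move=> hown hz; split; last lia.
rewrite -hown; symmetry; apply: h2 => //; lia.
Qed.

Lemma path_ball (V : finType) (E : rel V) (F : {set V * V}) (c : V) :
  (forall a b, (a, b) \in F -> E a b) ->
  forall t : seq V, path (fun a b => (a, b) \in F) c t -> last c t \in gball E c (size t).
Proof.
move=> hF; elim/last_ind => [|t y IH]; first by rewrite gball0 inE.
rewrite rcons_path last_rcons size_rcons => /andP [pt hl].
rewrite gballS; apply/orP; right; apply/existsP; exists (last c t).
by rewrite IH //= hF.
Qed.

Section Main.
Variables (T : finType) (e : rel T) (hsym : symmetric e) (hirr : irreflexive e).
Variables (H : nat) (hH : (0 < H)%N).
Local Notation L := (LL H).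
Local Notation V := (VV T H).
Local Notation adjE := (@adj T e H).

Definition phi (u : T) : {set V} :=
  [set y : V | match y with inl (u', _) => u' == u | inr (u', v, _) => (u' == u) && e u' v end].

Lemma NN_gt0 (u : T) : (0 < NN T H)%N.
Proof.
rewrite /NN muln_gt0 LL_gt0 // andbT; apply/card_gt0P; by exists u.
Qed.

Lemma rkL_lt (v : T) : (rk v * L < NN T H)%N.
Proof. by rewrite /NN ltn_pmul2r ?LL_gt0 // /rk ltn_ord. Qed.

Lemma minor_ok : minor_of e adjE.
Proof.
exists phi; split.
- move=> u; apply/set0Pn; exists (inl (u, Ordinal (NN_gt0 u))); by rewrite inE.
- move=> x y hxy; rewrite -setI_eq0; apply/eqP/setP => z; rewrite !inE.
  case: z => [[u' p]|[[u' v] t]].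
    by apply/negbTE; apply/negP => /andP [/eqP -> /eqP h]; rewrite h eqxx in hxy.
  by apply/negbTE; apply/negP => /andP [/andP [/eqP -> _] /andP [/eqP h _]]; rewrite h eqxx in hxy.
- move=> u.
  set R := [rel x y | [&& x \in phi u, y \in phi u & adjE x y]].
  have symR : symmetric R.
    by move=> x y; rewrite /R /= adj_sym // andbCA.
  set r0 : V := inl (u, Ordinal (NN_gt0 u)).
  have C1 : forall p : 'I_(NN T H), connect R r0 (inl (u, p)).
    case=> p; elim: p => [|p IH] hp.
      by rewrite /r0; have -> : Ordinal hp = Ordinal (NN_gt0 u) by apply: val_inj.
    apply: connect_trans (IH (ltnW hp)) (connect1 _).
    by rewrite /R /= !inE !eqxx /=.
  have C2 : forall v, e u v -> forall t : 'I_H, connect R r0 (inr (u, v, t)).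
    move=> v he; case=> t; elim: t => [|t IH] ht.
      apply: connect_trans (C1 (Ordinal (rkL_lt v))) (connect1 _).
      by rewrite /R /= !inE !eqxx he.
    apply: connect_trans (IH (ltnW ht)) (connect1 _).
    by rewrite /R /= !inE !eqxx he.
  have C3 : forall a, a \in phi u -> connect R r0 a.
    move=> [[u' p]|[[u' v] t]]; rewrite inE.
      by move/eqP => ->.
    by case/andP => /eqP -> /C2.
  move=> a b ha hb; apply: connect_trans (C3 b hb).
  by rewrite (sym_connect_sym symR); apply: C3.
- move=> u v he.
  have hK : (H.-1 < H)%N by rewrite prednK.
  exists (inr (u, v, Ordinal hK)), (inr (v, u, Ordinal hK)).
  by rewrite !inE /= he hsym he !eqxx /= orbT.
Qed.

Lemma growth_small r : (r.*2 < H)%N -> (growth adjE r <= 1 + 3 * r)%N.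
Proof.
rewrite /growth => hr; apply/bigmax_leqP => S /existsP [F /andP [hsub hrad]].
case/existsP: hrad => c /andP [cS /forallP hall].
have hF : forall a b, (a, b) \in F -> adjE a b.
  move=> a b hab; move/forallP: hsub => /(_ a) /forallP /(_ b) /implyP /(_ hab).
  by case/and4P.
have sub : S \subset gball adjE c r.
  apply/subsetP => x xS; have := hall x; rewrite xS /=.
  case/existsP => k /existsP [t /andP [pt /eqP <-]].
  apply: (subsetP (gball_mono _ _ (_ : (size t <= r)%N))); first by rewrite size_tuple -ltnS.
  exact: path_ball hF _ pt.
apply: leq_trans (subset_leq_card sub) _.
pose P := [pred x | (x \in gball adjE c r) && (2 < #|[set y | adjE x y]|)%N].
have pot := @gball_pot _ adjE (@adj_sym T e hsym H) c (@psi T H) _ (@own T H) H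
   (@adj_psi T e H hH) (@adj_own T e H hH).
have key : forall x1 x2, P x1 -> P x2 -> x1 = x2.
  move=> x1 x2 /andP [h1 d1] /andP [h2 d2].
  apply: (bigv_uniq hirr hH d1 d2).
  have [a1 b1] := pot r x1 h1; have [a2 b2] := pot r x2 h2.
  rewrite (bigv_psi hirr hH d1) in a1; rewrite (bigv_psi hirr hH d2) in a2.
  have hc : (psi c + r < H)%N by move: hr; rewrite -addnn; lia.
  by have [-> _] := b1 hc; have [-> _] := b2 hc.
case: (pickP P) => [b hb | hnone].
  apply: (gball_card (@adj_sym T e hsym H) (b := b)) => [x|x xb xnb]; first exact: deg_le3.
  rewrite /deg leqNgt; apply/negP => hx.
  by have := key x b; rewrite /P /= xb hx => /(_ isT hb) hxb; rewrite hxb eqxx in xnb.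
apply: (gball_card (@adj_sym T e hsym H) (b := c)) => [x|x xb xnb]; first exact: deg_le3.
rewrite /deg leqNgt; apply/negP => hx.
by have := hnone x; rewrite /= xb hx.
Qed.

Lemma growth_all r : (growth adjE r <= 3 * #|T| * #|T| * H)%N.
Proof.
rewrite /growth; apply/bigmax_leqP => S _.
apply: leq_trans (max_card _) _.
rewrite card_sum !card_prod !card_ord /NN /LL; lia.
Qed.
End Main.

Unset Implicit Arguments.
Local Open Scope ring_scope.
Theorem corollary20 (R : realType) (f : nat -> R)
  (hsup : superlinear f)
  (hf : forall r : nat, (0 < r)%N -> 1 + 3 * r%:R <= f r)
  (T : finType) (e : rel T) (hG : simple_graph e) :
  exists (T' : finType) (e' : rel T'),
    [/\ simple_graph e', minor_of e e' &
        forall r : nat, (0 < r)%N -> (growth e' r)%:R <= f r].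
Proof.
case: hG => hsym hirr.
have [N0 _ HN] := cvgry_gt hsup ((3 * #|T| * #|T| * 2)%N%:R).
pose H := (N0.*2).+1.
have hH : (0 < H)%N by [].
eexists; exists (@adj T e H); split.
- by split; [exact: adj_sym | exact: adj_irr].
- exact: minor_ok.
move=> r r0; case: (ltnP r.*2 H) => hr.
  apply: le_trans (_ : ((1 + 3 * r)%N)%:R <= _).
    by rewrite ler_nat; exact: growth_small.
  by rewrite natrD natrM; exact: hf.
have rN : (N0 <= r)%N by move: hr; rewrite /H; lia.
have := HN r rN; rewrite /= ltr_pdivlMr ?ltr0n // => hlt.
apply: le_trans (ltW hlt); rewrite -natrM ler_nat.
apply: leq_trans (growth_all e hH r) _.
have -> : (3 * #|T| * #|T| * 2 * r = 3 * #|T| * #|T| * (2 * r))%N by rewrite mulnA.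
by apply: leq_mul => //; rewrite mul2n.
Qed.
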